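(* Let $S$ be a finite nonempty set of natural numbers. (1) If $S$ has type $(p,q)$ with $p\geq3$, then some subset of $S$ of cardinality $|S|-1$ has type $(p-1,q)$; symmetrically, if $q\geq 3$ some subset of cardinality $|S|-1$ has type $(p,q-1)$. (2) If $S$ has type $(2,q)$, then some subset of $S$ of cardinality $|S|-1$ is a caterpillar or has a type $(p',q')$ with $p'+q'\leq q$; symmetrically, if $S$ has type $(p,2)$, some subset of cardinality $|S|-1$ is a caterpillar or has a type $(p',q')$ with $p'+q'\leq p$. (3) If $S$ has type $(p,q)$ with $p+q<|S|$, then some subset of $S$ of cardinality $|S|-1$ also has type $(p,q)$. (4) The caterpillars are exactly the finite subsets of $\mathbb N$ having no subset of type $(2,2)$.
   Context: For $m\in\mathbb N$ let $d(m)$ be the finite set of integers with $m=\sum_{i\in d(m)}2^i$. For a finite $S\subset\mathbb N$ with $|S|\geq2$, $s(S)=\max\{i:\exists x,y\in S,\ i\in d(x)\setminus d(y)\}$; with $S_0=\{x\in S:s(S)\notin d(x)\}$, $S_1=\{x\in S:s(S)\in d(x)\}$ (both nonempty), $(S_0,S_1)$ is the split of $S$, written $S=(S_0,S_1)$. Caterpillars: the empty set and singletons are caterpillars; a finite $S$ with $|S|\geq 2$ and split $(S_0,S_1)$ is a caterpillar iff one of $S_0,S_1$ is a singleton and the other a caterpillar. Every finite $S\subset\mathbb N$ that is not a caterpillar, with split $(L,R)$, has a type $t(S)\in\mathbb N\times\mathbb N$ defined recursively: $t(S)=(|L|,|R|)$ if $|L|,|R|\geq 2$; $t(S)=t(L)$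 if $|R|=1$; $t(S)=t(R)$ if $|L|=1$. *)

(* Defs.v *)
From mathcomp Require Import all_boot.
From mathcomp Require Import finmap.
Set Implicit Arguments. Unset Strict Implicit. Unset Printing Implicit Defensive.
Local Open Scope fset_scope.

(* d(m): the set of binary digit positions of m, i.e. m = sum_{i in d m} 2^i.
   All such positions are < m.+1 since 2^i > i. *)
Definition d (m : nat) : {fset nat} :=
  [fset i | i in iota 0 m.+1 & odd (m %/ 2 ^ i)].

(* s(S) = max { i | exists x y in S, i in d x \ d y }  (meaningful for |S| >= 2) *)
Definition s (S : {fset nat}) : nat :=
  \max_(x <- S) \max_(y <- S) \max_(i <- d x `\` d y) i.

Definition split0 (S : {fset nat}) : {fset nat} := [fset x in S | s S \notin d x].
Definition split1 (S : {fset nat}) : {fset nat} := [fset x in S | s S \in d x].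

Inductive caterpillar : {fset nat} -> Prop :=
| cat_small S : #|` S| <= 1 -> caterpillar S
| cat_L S : 2 <= #|` S| -> #|` split0 S| = 1 -> caterpillar (split1 S) -> caterpillar S
| cat_R S : 2 <= #|` S| -> #|` split1 S| = 1 -> caterpillar (split0 S) -> caterpillar S.

(* has_type S t  <->  S is not a caterpillar and t(S) = t (graph of the
   recursively defined type function). *)
Inductive has_type : {fset nat} -> nat * nat -> Prop :=
| ty_base S : 2 <= #|` S| -> 2 <= #|` split0 S| -> 2 <= #|` split1 S| ->
    has_type S (#|` split0 S|, #|` split1 S|)
| ty_R S t : 2 <= #|` S| -> #|` split1 S| = 1 -> has_type (split0 S) t -> has_type S t
| ty_L S t : 2 <= #|` S| -> #|` split0 S| = 1 -> has_type (split1 S) t -> has_type S t.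

(* Main.v *)
Require Import Defs.
From mathcomp Require Import all_boot.
From mathcomp Require Import finmap zify.
From Stdlib Require Import Classical.
Local Open Scope fset_scope.
Local Open Scope nat_scope.
Set Implicit Arguments. Unset Strict Implicit.
Lemma in_d i m : (i \in d m) = odd (m %/ 2 ^ i).
Proof.
rewrite /d !inE.
change ((i \in iota 0 m.+1) && odd (m %/ 2 ^ i) = odd (m %/ 2 ^ i)).
rewrite mem_iota add0n /=.
case: (ltnP i m.+1) => //= H.
rewrite divn_small //. exact: leq_trans H (ltnW (ltn_expl _ (ltnSn 1))).
Qed.
Lemma d_inj x y : (forall i, (i \in d x) = (i \in d y)) -> x = y.
Proof.
move=> H.
have {}H : forall i, odd (x %/ 2 ^ i) = odd (y %/ 2 ^ i) by move=> i; rewrite -!in_d.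
elim: (x + y).+1 {-2}x {-2}y (ltnSn (x + y)) H => // n IH {}x {}y Hn H.
case: (posnP (x + y)) => [/eqP|Hp].
  by rewrite addn_eq0 => /andP [/eqP -> /eqP ->].
rewrite -[x]odd_double_half -[y]odd_double_half.
have h0 := H 0; rewrite !expn0 !divn1 in h0; rewrite h0.
have -> : x./2 = y./2; last by [].
apply: IH.
  rewrite -!divn2. lia.
move=> i; rewrite -!divn2 -!divnMA -!expnS; exact: H.
Qed.

Lemma s_ub (S : {fset nat}) x y i : x \in S -> y \in S -> i \in d x -> i \notin d y -> i <= s S.
Proof.
move=> xS yS ix iy; rewrite /s.
have hi : i \in d x `\` d y by rewrite inE ix iy.
have h1 := @leq_bigmax_seq _ (d x `\` d y : seq nat) xpredT id i hi isT.
have h2 := @leq_bigmax_seq _ (S : seq nat) xpredT (fun y => \max_(i <- d x `\` d y) i) y yS isT.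
have h3 := @leq_bigmax_seq _ (S : seq nat) xpredT (fun x => \max_(y <- S) \max_(i <- d x `\` d y) i) x xS isT.
exact: leq_trans h1 (leq_trans h2 h3).
Qed.


Lemma s_mono (T S : {fset nat}) : T `<=` S -> s T <= s S.
Proof.
move=> /fsubsetP TS; rewrite /s.
apply/bigmax_leqP_seq => x xT _.
apply/bigmax_leqP_seq => y yT _.
apply/bigmax_leqP_seq => i; rewrite in_fsetD =>  /andP [iy ix] _.
exact: s_ub (TS _ xT) (TS _ yT) ix iy.
Qed.

Lemma s_att (S : {fset nat}) x0 y0 i0 : x0 \in S -> y0 \in S -> i0 \in d x0 -> i0 \notin d y0 ->
  exists x y, [/\ x \in S, y \in S, s S \in d x & s S \notin d y].
Proof.
move=> xS yS ix iy.
pose P v := v = 0 \/ exists x y, [/\ x \in S, y \in S, v \in d x & v \notin d y].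
have Pmax : forall a b, P a -> P b -> P (maxn a b).
  by move=> a b Ha Hb; rewrite /maxn; case: ltnP => _; [exact Hb | exact Ha].
have : P (s S).
  rewrite /s big_seq; apply: (big_ind P); first by left.
    exact: Pmax.
  move=> x xS'; rewrite big_seq; apply: (big_ind P); first by left.
    exact: Pmax.
  move=> y yS'; rewrite big_seq; apply: (big_ind P); first by left.
    exact: Pmax.
  move=> i; rewrite in_fsetD => /andP [iy' ix']. right; by exists x, y.
case=> // H0.
have := s_ub xS yS ix iy; rewrite H0 leqn0 => /eqP Ei.
exists x0, y0; rewrite -Ei; split=> //.
Qed.

Lemma in_split0 (S : {fset nat}) x : (x \in split0 S) = (x \in S) && (s S \notin d x).
Proof. by rewrite /split0 inE. Qed.

Lemma in_split1 (S : {fset nat}) x : (x \in split1 S) = (x \in S) && (s S \in d x).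
Proof. by rewrite /split1 inE. Qed.

Lemma split_or (S : {fset nat}) z : z \in S -> (z \in split0 S) || (z \in split1 S).
Proof. by move=> zS; rewrite in_split0 in_split1 zS /=; case: (s S \in d z). Qed.

Lemma split_disj (S : {fset nat}) z : z \in split0 S -> z \in split1 S -> False.
Proof. by rewrite in_split0 in_split1 => /andP [_ /negP H] /andP [_]. Qed.

Lemma split0_sub (S : {fset nat}) : split0 S `<=` S.
Proof. by apply/fsubsetP => z; rewrite in_split0 => /andP []. Qed.

Lemma split1_sub (S : {fset nat}) : split1 S `<=` S.
Proof. by apply/fsubsetP => z; rewrite in_split1 => /andP []. Qed.

Lemma card_split (S : {fset nat}) : #|` S| = #|` split0 S| + #|` split1 S|.
Proof.
rewrite -cardfsUI.
have -> : split0 S `&` split1 S = fset0.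
  apply/fsetP => z; rewrite in_fsetI inE.
  case h1: (z \in split0 S) => //=; case h2: (z \in split1 S) => //.
  case: (split_disj h1 h2).
have -> : split0 S `|` split1 S = S.
  apply/fsetP => z; rewrite in_fsetU.
  apply/idP/idP; last exact: split_or.
  by case/orP => [/(fsubsetP (split0_sub S)) | /(fsubsetP (split1_sub S))].
by rewrite cardfs0 addn0.
Qed.

Lemma pick_other (A : {fset nat}) x : x \in A -> 2 <= #|` A| -> exists a, a \in A /\ a != x.
Proof.
move=> xA H.
have E := cardfsD1 x A; rewrite xA in E.
have : A `\ x != fset0 by rewrite -cardfs_gt0; lia.
case/fset0Pn => a; rewrite in_fsetD1 => /andP [ax aA]; by exists a.
Qed.

Lemma pick_one (A : {fset nat}) : 1 <= #|` A| -> exists a, a \in A.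
Proof. by rewrite cardfs_gt0 => /fset0Pn. Qed.

Lemma split_ne (S : {fset nat}) : 2 <= #|` S| ->
  exists a b, a \in split0 S /\ b \in split1 S.
Proof.
move=> H.
have [x xS] : exists x, x \in S by apply: pick_one; lia.
have [y [yS yx]] := pick_other xS H.
have : exists i, (i \in d x) != (i \in d y).
  apply: NNPP => Hn; move/eqP: yx; apply; symmetry; apply: d_inj => i.
  apply/eqP; apply: NNPP => Hi; apply: Hn; by exists i; apply/negP.
case=> i; case Hx: (i \in d x); case Hy: (i \in d y) => // _.
- have [a [b [aS bS ha hb]]] := s_att xS yS Hx (negbT Hy).
  exists b, a; by rewrite in_split0 in_split1 aS bS ha hb.
- have [a [b [aS bS ha hb]]] := s_att yS xS Hy (negbT Hx).
  exists b, a; by rewrite in_split0 in_split1 aS bS ha hb.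
Qed.

Lemma restr (S T : {fset nat}) a b : T `<=` S -> a \in T -> b \in T ->
  a \in split0 S -> b \in split1 S ->
  split0 T = split0 S `&` T /\ split1 T = split1 S `&` T.
Proof.
move=> TS aT bT a0 b1.
have Es : s T = s S.
  apply/eqP; rewrite eqn_leq s_mono //=.
  move: a0 b1; rewrite in_split0 in_split1 => /andP [_ ha] /andP [_ hb].
  exact: s_ub bT aT hb ha.
split; apply/fsetP => z; rewrite in_fsetI ?in_split0 ?in_split1 Es;
  case zT: (z \in T); rewrite /= ?andbF ?andbT //;
  by rewrite (fsubsetP TS _ zT).
Qed.

Lemma rem0 (S : {fset nat}) x a : 2 <= #|` S| -> x \in split0 S -> a \in split0 S -> a != x ->
  [/\ split0 (S `\ x) = split0 S `\ x, split1 (S `\ x) = split1 S & 2 <= #|` S `\ x|].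
Proof.
move=> HS x0 a0 ax.
have [_ [b [_ b1]]] := split_ne HS.
have bx : b != x by apply/eqP => E; subst b; exact: split_disj x0 b1.
have aS := fsubsetP (split0_sub S) _ a0.
have bS := fsubsetP (split1_sub S) _ b1.
have aT : a \in S `\ x by rewrite in_fsetD1 ax aS.
have bT : b \in S `\ x by rewrite in_fsetD1 bx bS.
have [E0 E1] := restr (fsubD1set S x) aT bT a0 b1.
have E0' : split0 (S `\ x) = split0 S `\ x.
  rewrite E0; apply/fsetP => z; rewrite in_fsetI !in_fsetD1.
  case: (z =P x) => //= _; case h: (z \in split0 S) => //=.
  by rewrite (fsubsetP (split0_sub S) _ h).
have E1' : split1 (S `\ x) = split1 S.
  rewrite E1; apply/fsetP => z; rewrite in_fsetI !in_fsetD1.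
  case h: (z \in split1 S) => //=.
  rewrite (fsubsetP (split1_sub S) _ h) andbT.
  by apply/eqP => E; subst z; exact: split_disj x0 h.
split => //.
rewrite card_split.
have : 0 < #|` split0 (S `\ x)| by rewrite cardfs_gt0; apply/fset0Pn; exists a; rewrite E0' in_fsetD1 ax a0.
have : 0 < #|` split1 (S `\ x)| by rewrite cardfs_gt0; apply/fset0Pn; exists b; rewrite E1'.
lia.
Qed.

Lemma rem1 (S : {fset nat}) x a : 2 <= #|` S| -> x \in split1 S -> a \in split1 S -> a != x ->
  [/\ split0 (S `\ x) = split0 S, split1 (S `\ x) = split1 S `\ x & 2 <= #|` S `\ x|].
Proof.
move=> HS x1 a1 ax.
have [b [_ [b0 _]]] := split_ne HS.
have bx : b != x by apply/eqP => E; subst b; exact: split_disj b0 x1.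
have aS := fsubsetP (split1_sub S) _ a1.
have bS := fsubsetP (split0_sub S) _ b0.
have aT : a \in S `\ x by rewrite in_fsetD1 ax aS.
have bT : b \in S `\ x by rewrite in_fsetD1 bx bS.
have [E0 E1] := restr (fsubD1set S x) bT aT b0 a1.
have E1' : split1 (S `\ x) = split1 S `\ x.
  rewrite E1; apply/fsetP => z; rewrite in_fsetI !in_fsetD1.
  case: (z =P x) => //= _; case h: (z \in split1 S) => //=.
  by rewrite (fsubsetP (split1_sub S) _ h).
have E0' : split0 (S `\ x) = split0 S.
  rewrite E0; apply/fsetP => z; rewrite in_fsetI !in_fsetD1.
  case h: (z \in split0 S) => //=.
  rewrite (fsubsetP (split0_sub S) _ h) andbT.
  by apply/eqP => E; subst z; exact: split_disj h x1.
split => //.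
rewrite card_split.
have : 0 < #|` split1 (S `\ x)| by rewrite cardfs_gt0; apply/fset0Pn; exists a; rewrite E1' in_fsetD1 ax a1.
have : 0 < #|` split0 (S `\ x)| by rewrite cardfs_gt0; apply/fset0Pn; exists b; rewrite E0'.
lia.
Qed.

Lemma type_card S t : has_type S t -> 2 <= #|` S|.
Proof. by case. Qed.

Lemma type_sum S p q : has_type S (p, q) -> p + q <= #|` S|.
Proof.
move e: (p, q) => t H; elim: H p q e => {S t}.
- by move=> S HS H0 H1 p q [-> ->]; rewrite card_split.
- move=> S t HS H1 Ht IH p q e; rewrite card_split; have := IH p q e; lia.
- move=> S t HS H0 Ht IH p q e; rewrite card_split; have := IH p q e; lia.
Qed.

Lemma type_notcat S t : has_type S t -> ~ caterpillar S.
Proof.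
elim => {S t}.
- move=> S HS H0 H1 Hc; inversion Hc; subst; lia.
- move=> S t HS H1 Ht IH Hc; inversion Hc; subst.
  + lia.
  + have := type_card Ht; lia.
  + exact: IH.
- move=> S t HS H0 Ht IH Hc; inversion Hc; subst.
  + lia.
  + exact: IH.
  + have := type_card Ht; lia.
Qed.

Lemma cat_sub S : caterpillar S -> forall T, T `<=` S -> caterpillar T.
Proof.
elim => {S}.
- move=> S HS T TS; apply: cat_small; exact: leq_trans (fsubset_leq_card TS) HS.
- move=> S HS H0 Hc IH T TS.
  have /cardfs1P [a Ea] : #|` split0 S| == 1 by apply/eqP.
  have a0 : a \in split0 S by rewrite Ea in_fset1.
  case aT: (a \in T); last first.
    apply: IH; apply/fsubsetP => z zT.
    have := split_or (fsubsetP TS _ zT); case/orP => // h.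
    by move: h; rewrite Ea in_fset1 => /eqP E; subst z; rewrite zT in aT.
  case: (classic (exists b, b \in T /\ b \in split1 S)) => [[b [bT b1]] | Hn].
    have [E0 E1] := restr TS aT bT a0 b1.
    apply: cat_L.
    + rewrite card_split.
      have : 0 < #|` split0 T| by rewrite cardfs_gt0; apply/fset0Pn; exists a; rewrite E0 in_fsetI a0.
      have : 0 < #|` split1 T| by rewrite cardfs_gt0; apply/fset0Pn; exists b; rewrite E1 in_fsetI b1.
      lia.
    + rewrite E0 Ea; apply/eqP/cardfs1P; exists a; apply/fsetP => z.
      rewrite in_fsetI !in_fset1; case: (z =P a) => // ->; by rewrite aT.
    + apply: IH; rewrite E1; exact: fsubsetIl.
  apply: cat_small.
  have : T `<=` [fset a].
    apply/fsubsetP => z zT.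
    have := split_or (fsubsetP TS _ zT); case/orP => h; first by rewrite -Ea.
    by case: Hn; exists z.
  move/fsubset_leq_card; by rewrite cardfs1.
- move=> S HS H1 Hc IH T TS.
  have /cardfs1P [a Ea] : #|` split1 S| == 1 by apply/eqP.
  have a1 : a \in split1 S by rewrite Ea in_fset1.
  case aT: (a \in T); last first.
    apply: IH; apply/fsubsetP => z zT.
    have := split_or (fsubsetP TS _ zT); case/orP => // h.
    by move: h; rewrite Ea in_fset1 => /eqP E; subst z; rewrite zT in aT.
  case: (classic (exists b, b \in T /\ b \in split0 S)) => [[b [bT b0]] | Hn].
    have [E0 E1] := restr TS bT aT b0 a1.
    apply: cat_R.
    + rewrite card_split.
      have : 0 < #|` split1 T| by rewrite cardfs_gt0; apply/fset0Pn; exists a; rewrite E1 in_fsetI a1.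
      have : 0 < #|` split0 T| by rewrite cardfs_gt0; apply/fset0Pn; exists b; rewrite E0 in_fsetI b0.
      lia.
    + rewrite E1 Ea; apply/eqP/cardfs1P; exists a; apply/fsetP => z.
      rewrite in_fsetI !in_fset1; case: (z =P a) => // ->; by rewrite aT.
    + apply: IH; rewrite E0; exact: fsubsetIl.
  apply: cat_small.
  have : T `<=` [fset a].
    apply/fsubsetP => z zT.
    have := split_or (fsubsetP TS _ zT); case/orP => h; last by rewrite -Ea.
    by case: Hn; exists z.
  move/fsubset_leq_card; by rewrite cardfs1.
Qed.

Lemma notcat_type_aux n S : #|` S| < n -> ~ caterpillar S -> exists p q, has_type S (p, q).
Proof.
elim: n S => // n IH S Hn Hc.
have HS : 2 <= #|` S| by case: (leqP #|` S| 1) => // h; case: Hc; exact: cat_small.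
have [a [b [a0 b1]]] := split_ne HS.
have h0 : 0 < #|` split0 S| by rewrite cardfs_gt0; apply/fset0Pn; exists a.
have h1 : 0 < #|` split1 S| by rewrite cardfs_gt0; apply/fset0Pn; exists b.
have cs := card_split S.
case: (leqP 2 #|` split0 S|) => H0; case: (leqP 2 #|` split1 S|) => H1.
- by exists #|` split0 S|, #|` split1 S|; apply: ty_base.
- have E1 : #|` split1 S| = 1 by lia.
  case: (classic (caterpillar (split0 S))) => Hc0.
    by case: Hc; apply: cat_R.
  have [p [q Hpq]] := IH (split0 S) ltac:(lia) Hc0.
  by exists p, q; apply: ty_R.
- have E0 : #|` split0 S| = 1 by lia.
  case: (classic (caterpillar (split1 S))) => Hc1.
    by case: Hc; apply: cat_L.
  have [p [q Hpq]] := IH (split1 S) ltac:(lia) Hc1.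
  by exists p, q; apply: ty_L.
- case: Hc; apply: cat_L => //; first lia.
  apply: cat_small; lia.
Qed.

Lemma notcat_type S : ~ caterpillar S -> exists p q, has_type S (p, q).
Proof. exact: notcat_type_aux (ltnSn _). Qed.

Lemma type_22 S t : has_type S t -> exists T, T `<=` S /\ has_type T (2, 2).
Proof.
elim => {S t}.
- move=> S HS H0 H1.
  have [a1 a10] := pick_one (ltnW H0).
  have [a2 [a20 a21]] := pick_other a10 H0.
  have [b1 b11] := pick_one (ltnW H1).
  have [b2 [b21 b22]] := pick_other b11 H1.
  pose T := [fset a1; a2] `|` [fset b1; b2].
  have TS : T `<=` S.
    apply/fsubsetP => z; rewrite in_fsetU !in_fset2.
    case/orP => /orP [] /eqP ->;
    by [apply: (fsubsetP (split0_sub S)) | apply: (fsubsetP (split1_sub S))].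
  have a1T : a1 \in T by rewrite in_fsetU in_fset2 eqxx.
  have b1T : b1 \in T by rewrite in_fsetU; apply/orP; right; rewrite in_fset2 eqxx.
  have [E0 E1] := restr TS a1T b1T a10 b11.
  have E0' : split0 T = [fset a1; a2].
    rewrite E0; apply/fsetP => z; rewrite in_fsetI /T in_fsetU !in_fset2.
    case: (z =P a1) => [->|_] //=; first by rewrite a10.
    case: (z =P a2) => [->|_] //=; first by rewrite a20.
    case: (z =P b1) => [->|_] /=; first by rewrite andbT; apply/negP => h; exact: split_disj h b11.
    case: (z =P b2) => [->|_] /=; first by rewrite andbT; apply/negP => h; exact: split_disj h b21.
    by rewrite andbF.
  have E1' : split1 T = [fset b1; b2].
    rewrite E1; apply/fsetP => z; rewrite in_fsetI /T in_fsetU !in_fset2.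
    case: (z =P b1) => [->|_] /=; first by rewrite b11 orbT.
    case: (z =P b2) => [->|_] /=; first by rewrite b21 orbT.
    case: (z =P a1) => [->|_] /=; first by rewrite andbT; apply/negP => h; exact: split_disj a10 h.
    case: (z =P a2) => [->|_] /=; first by rewrite andbT; apply/negP => h; exact: split_disj a20 h.
    by rewrite andbF.
  have c0 : #|` split0 T| = 2 by rewrite E0' cardfs2 eq_sym a21.
  have c1 : #|` split1 T| = 2 by rewrite E1' cardfs2 eq_sym b22.
  exists T; split => //.
  rewrite -{1}c0 -c1; apply: ty_base; rewrite ?c0 ?c1 // card_split c0 c1 //.
- move=> S t HS H1 Ht [T [TS HT]]; exists T; split => //.
  exact: fsubset_trans TS (split0_sub S).
- move=> S t HS H0 Ht [T [TS HT]]; exists T; split => //.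
  exact: fsubset_trans TS (split1_sub S).
Qed.

Lemma nonempty_other (A : {fset nat}) x : 2 <= #|` A `\ x| -> exists a, a \in A /\ a != x.
Proof.
move=> H; have [a] := pick_one (ltnW H); rewrite in_fsetD1 => /andP [ax aA]; by exists a.
Qed.

Lemma P1a S t : has_type S t -> 3 <= t.1 -> exists x, x \in S /\ has_type (S `\ x) (t.1 - 1, t.2).
Proof.
elim => {S t} /=.
- move=> S HS H0 H1 H3.
  have [x x0] := pick_one (ltnW H0).
  have [a [a0 ax]] := pick_other x0 H0.
  have [E0 E1 HT] := rem0 HS x0 a0 ax.
  exists x; split; first exact: (fsubsetP (split0_sub S)).
  have c : #|` split0 (S `\ x)| = #|` split0 S| - 1.
    by rewrite E0 (cardfsD1 x (split0 S)) x0 /= add1n subn1.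
  rewrite -c -E1; apply: ty_base => //; rewrite ?c ?E1 //; by rewrite ltn_subRL.
- move=> S [p q] HS H1 Ht IH /= H3.
  have [x [x0 Hx]] := IH H3.
  have [a [a0 ax]] := nonempty_other (type_card Hx).
  have [E0 E1 HT] := rem0 HS x0 a0 ax.
  exists x; split; first exact: (fsubsetP (split0_sub S)).
  apply: ty_R => //; rewrite ?E0 ?E1 //.
- move=> S [p q] HS H0 Ht IH /= H3.
  have [x [x1 Hx]] := IH H3.
  have [a [a1 ax]] := nonempty_other (type_card Hx).
  have [E0 E1 HT] := rem1 HS x1 a1 ax.
  exists x; split; first exact: (fsubsetP (split1_sub S)).
  apply: ty_L => //; rewrite ?E0 ?E1 //.
Qed.

Lemma P1b S t : has_type S t -> 3 <= t.2 -> exists x, x \in S /\ has_type (S `\ x) (t.1, t.2 - 1).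
Proof.
elim => {S t} /=.
- move=> S HS H0 H1 H3.
  have [x x1] := pick_one (ltnW H1).
  have [a [a1 ax]] := pick_other x1 H1.
  have [E0 E1 HT] := rem1 HS x1 a1 ax.
  exists x; split; first exact: (fsubsetP (split1_sub S)).
  have c : #|` split1 (S `\ x)| = #|` split1 S| - 1.
    by rewrite E1 (cardfsD1 x (split1 S)) x1 /= add1n subn1.
  rewrite -c -E0; apply: ty_base => //; rewrite ?c ?E0 //; by rewrite ltn_subRL.
- move=> S [p q] HS H1 Ht IH /= H3.
  have [x [x0 Hx]] := IH H3.
  have [a [a0 ax]] := nonempty_other (type_card Hx).
  have [E0 E1 HT] := rem0 HS x0 a0 ax.
  exists x; split; first exact: (fsubsetP (split0_sub S)).
  apply: ty_R => //; rewrite ?E0 ?E1 //.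
- move=> S [p q] HS H0 Ht IH /= H3.
  have [x [x1 Hx]] := IH H3.
  have [a [a1 ax]] := nonempty_other (type_card Hx).
  have [E0 E1 HT] := rem1 HS x1 a1 ax.
  exists x; split; first exact: (fsubsetP (split1_sub S)).
  apply: ty_L => //; rewrite ?E0 ?E1 //.
Qed.

Definition catOr T q := caterpillar T \/ exists p' q', has_type T (p', q') /\ p' + q' <= q.

Lemma cat_or_split (A : {fset nat}) : exists p q, p + q <= #|` A| /\
   (caterpillar A \/ has_type A (p, q)).
Proof.
case: (classic (caterpillar A)) => H.
  by exists 0, 0; split; [| left].
have [p [q Hpq]] := notcat_type H.
exists p, q; split; [exact: type_sum Hpq | by right].
Qed.

Lemma P2a S t : has_type S t -> t.1 = 2 -> exists x, x \in S /\ catOr (S `\ x) t.2.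
Proof.
elim => {S t} /=.
- move=> S HS H0 H1 H2.
  have [x x0] := pick_one (ltnW H0).
  have [a [a0 ax]] := pick_other x0 H0.
  have [E0 E1 HT] := rem0 HS x0 a0 ax.
  exists x; split; first exact: (fsubsetP (split0_sub S)).
  have c : #|` split0 (S `\ x)| = 1.
    by rewrite E0; move: H2; rewrite (cardfsD1 x (split0 S)) x0 /= add1n => -[].
  have [p [q [Hs [Hc | Ht]]]] := cat_or_split (split1 S).
    by left; apply: cat_L; rewrite ?E1.
  right; exists p, q; split => //; apply: ty_L; rewrite ?E1 //.
- move=> S [p q] HS H1 Ht IH /= H2.
  have [x [x0 Hx]] := IH H2.
  have [a [a0 ax]] : exists a, a \in split0 S /\ a != x.
    apply: pick_other x0 _; exact: type_card Ht.
  have [E0 E1 HT] := rem0 HS x0 a0 ax.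
  exists x; split; first exact: (fsubsetP (split0_sub S)).
  case: Hx => [Hc | [p' [q' [Hp Hs]]]].
    by left; apply: cat_R; rewrite ?E0 ?E1.
  by right; exists p', q'; split => //; apply: ty_R; rewrite ?E0 ?E1.
- move=> S [p q] HS H0 Ht IH /= H2.
  have [x [x1 Hx]] := IH H2.
  have [a [a1 ax]] : exists a, a \in split1 S /\ a != x.
    apply: pick_other x1 _; exact: type_card Ht.
  have [E0 E1 HT] := rem1 HS x1 a1 ax.
  exists x; split; first exact: (fsubsetP (split1_sub S)).
  case: Hx => [Hc | [p' [q' [Hp Hs]]]].
    by left; apply: cat_L; rewrite ?E0 ?E1.
  by right; exists p', q'; split => //; apply: ty_L; rewrite ?E0 ?E1.
Qed.

Lemma P2b S t : has_type S t -> t.2 = 2 -> exists x, x \in S /\ catOr (S `\ x) t.1.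
Proof.
elim => {S t} /=.
- move=> S HS H0 H1 H2.
  have [x x1] := pick_one (ltnW H1).
  have [a [a1 ax]] := pick_other x1 H1.
  have [E0 E1 HT] := rem1 HS x1 a1 ax.
  exists x; split; first exact: (fsubsetP (split1_sub S)).
  have c : #|` split1 (S `\ x)| = 1.
    by rewrite E1; move: H2; rewrite (cardfsD1 x (split1 S)) x1 /= add1n => -[].
  have [p [q [Hs [Hc | Ht]]]] := cat_or_split (split0 S).
    by left; apply: cat_R; rewrite ?E0.
  right; exists p, q; split => //; apply: ty_R; rewrite ?E0 //.
- move=> S [p q] HS H1 Ht IH /= H2.
  have [x [x0 Hx]] := IH H2.
  have [a [a0 ax]] : exists a, a \in split0 S /\ a != x.
    apply: pick_other x0 _; exact: type_card Ht.
  have [E0 E1 HT] := rem0 HS x0 a0 ax.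
  exists x; split; first exact: (fsubsetP (split0_sub S)).
  case: Hx => [Hc | [p' [q' [Hp Hs]]]].
    by left; apply: cat_R; rewrite ?E0 ?E1.
  by right; exists p', q'; split => //; apply: ty_R; rewrite ?E0 ?E1.
- move=> S [p q] HS H0 Ht IH /= H2.
  have [x [x1 Hx]] := IH H2.
  have [a [a1 ax]] : exists a, a \in split1 S /\ a != x.
    apply: pick_other x1 _; exact: type_card Ht.
  have [E0 E1 HT] := rem1 HS x1 a1 ax.
  exists x; split; first exact: (fsubsetP (split1_sub S)).
  case: Hx => [Hc | [p' [q' [Hp Hs]]]].
    by left; apply: cat_L; rewrite ?E0 ?E1.
  by right; exists p', q'; split => //; apply: ty_L; rewrite ?E0 ?E1.
Qed.

Lemma P3 S t : has_type S t -> t.1 + t.2 < #|` S| -> exists x, x \in S /\ has_type (S `\ x) t.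
Proof.
case => {S t} /=.
- by move=> S HS H0 H1; rewrite (card_split S) ltnn.
- move=> S t HS H1 Ht _.
  have /cardfs1P [b Eb] : #|` split1 S| == 1 by apply/eqP.
  have b1 : b \in split1 S by rewrite Eb in_fset1.
  exists b; split; first exact: (fsubsetP (split1_sub S)).
  suff -> : S `\ b = split0 S by [].
  apply/fsetP => z; rewrite in_fsetD1.
  case: (z =P b) => [->|/eqP zb] /=.
    by apply/esym/negP => h; exact: split_disj h b1.
  apply/idP/idP => [zS | /(fsubsetP (split0_sub S)) //].
  have := split_or zS; by rewrite Eb in_fset1 (negbTE zb) orbF.
- move=> S t HS H0 Ht _.
  have /cardfs1P [b Eb] : #|` split0 S| == 1 by apply/eqP.
  have b0 : b \in split0 S by rewrite Eb in_fset1.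
  exists b; split; first exact: (fsubsetP (split0_sub S)).
  suff -> : S `\ b = split1 S by [].
  apply/fsetP => z; rewrite in_fsetD1.
  case: (z =P b) => [->|/eqP zb] /=.
    by apply/esym/negP => h; exact: split_disj b0 h.
  apply/idP/idP => [zS | /(fsubsetP (split1_sub S)) //].
  have := split_or zS; by rewrite Eb in_fset1 (negbTE zb).
Qed.

Lemma D1_props (S : {fset nat}) x : x \in S -> S `\ x `<=` S /\ #|` S `\ x| = #|` S| - 1.
Proof.
move=> xS; split; first exact: fsubD1set.
by rewrite (cardfsD1 x S) xS /= add1n subn1.
Qed.

Local Open Scope fset_scope.

Theorem mainTheorem7 :
  forall S : {fset nat},
    (S != fset0 ->
      (* (1) *)
      (forall p q, has_type S (p, q) ->
         (3 <= p -> exists T : {fset nat},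
            T `<=` S /\ #|` T| = #|` S| - 1 /\ has_type T (p - 1, q)) /\
         (3 <= q -> exists T : {fset nat},
            T `<=` S /\ #|` T| = #|` S| - 1 /\ has_type T (p, q - 1))) /\
      (* (2) *)
      (forall q, has_type S (2, q) -> exists T : {fset nat},
         T `<=` S /\ #|` T| = #|` S| - 1 /\
         (caterpillar T \/ exists p' q', has_type T (p', q') /\ p' + q' <= q)) /\
      (forall p, has_type S (p, 2) -> exists T : {fset nat},
         T `<=` S /\ #|` T| = #|` S| - 1 /\
         (caterpillar T \/ exists p' q', has_type T (p', q') /\ p' + q' <= p)) /\
      (* (3) *)
      (forall p q, has_type S (p, q) -> p + q < #|` S| -> exists T : {fset nat},
         T `<=` S /\ #|` T| = #|` S| - 1 /\ has_type T (p, q))) /\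
    (* (4) *)
    (caterpillar S <-> ~ exists T : {fset nat}, T `<=` S /\ has_type T (2, 2)).
Proof.
move=> S; split; [move=> _; split; [|split; [|split]] | split].
- move=> p q H; split => H3.
    have [x [xS Hx]] := P1a H H3; have [h1 h2] := D1_props xS.
    by exists (S `\ x).
  have [x [xS Hx]] := P1b H H3; have [h1 h2] := D1_props xS.
  by exists (S `\ x).
- move=> q H; have [x [xS Hx]] := P2a H erefl; have [h1 h2] := D1_props xS.
  by exists (S `\ x).
- move=> p H; have [x [xS Hx]] := P2b H erefl; have [h1 h2] := D1_props xS.
  by exists (S `\ x).
- move=> p q H Hl; have [x [xS Hx]] := P3 H Hl; have [h1 h2] := D1_props xS.
  by exists (S `\ x).
- move=> Hc [T [TS HT]]; exact: type_notcat HT (cat_sub Hc TS).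
- move=> Hn; apply: NNPP => Hc; apply: Hn.
  have [p [q H]] := notcat_type Hc; exact: type_22 H.
Qed.
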